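(* Let $d,k\ge 1$, let $g:\mathbb{R}^{k}\to\mathbb{R}$ be differentiable, and for $B\in\mathbb{R}^{k\times d}$ consider $f(z)=g(Bz)$, $f:\mathbb{R}^d\to\mathbb{R}$. Given one training sample $(x,y)\in\mathbb{R}^d\times\mathbb{R}$, suppose $f$ is trained to minimize $\frac{1}{2}(y-f(x))^2$ by gradient descent on $B$ with learning rate $\eta>0$, i.e. $B^{(t+1)}=B^{(t)}-\eta\,\nabla_B\big[\tfrac12(y-g(B^{(t)}x))^2\big]$. Let $B^{(t)}$ denote $B$ after $t$ steps and $f_t(z):=g(B^{(t)}z)$. If $B^{(0)}=\mathbf{0}$, then for every time step $t$ and every $z\in\mathbb{R}^d$, $$\nabla f_t(z)\,\nabla f_t(z)^T \propto {B^{(t)}}^T B^{(t)},$$ i.e. $\nabla f_t(z)\nabla f_t(z)^T$ is a scalar multiple of ${B^{(t)}}^TB^{(t)}$.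
   Context: $\nabla f_t(z)\in\mathbb{R}^d$ denotes the gradient of $f_t$ with respect to its input $z$. ''$P\propto Q$'' for matrices means $P=cQ$ for some scalar $c$. *)

(* Defs.v *)
From HB Require Import structures.
From mathcomp Require Import all_boot all_order all_algebra.
From mathcomp Require Import all_classical all_reals all_analysis.
Set Implicit Arguments. Unset Strict Implicit. Unset Printing Implicit Defensive.
Import Order.TTheory GRing.Theory Num.Theory.
Import numFieldNormedType.Exports.
Local Open Scope ring_scope.

(* Gradient of a real-valued function of a matrix argument (vectors being
   m x 1 matrices): the matrix of partial derivatives
   (mgrad F A) i j = dF/dA_ij (A), the directional derivative along delta_mx i j. *)
Definition mgrad (R : realType) (m n : nat) (F : 'M[R]_(m, n) -> R)
  (A : 'M[R]_(m, n)) : 'M[R]_(m, n) :=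
  \matrix_(i, j) 'D_(delta_mx i j) F A.

Definition sqloss (R : realType) (d k : nat) (g : 'cV[R]_k -> R)
  (x : 'cV[R]_d) (y : R) (B : 'M[R]_(k, d)) : R :=
  (y - g (B *m x)) ^+ 2 / 2.

Fixpoint gd_iter (R : realType) (d k : nat) (g : 'cV[R]_k -> R)
  (x : 'cV[R]_d) (y eta : R) (t : nat) : 'M[R]_(k, d) :=
  match t with
  | 0 => 0
  | t'.+1 => gd_iter g x y eta t' - eta *: mgrad (sqloss g x y) (gd_iter g x y eta t')
  end.

Definition f_t (R : realType) (d k : nat) (g : 'cV[R]_k -> R)
  (x : 'cV[R]_d) (y eta : R) (t : nat) (z : 'cV[R]_d) : R :=
  g (gd_iter g x y eta t *m z).

(* Main.v *)
Require Import Defs.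
From HB Require Import structures.
From mathcomp Require Import all_boot all_order all_algebra.
From mathcomp Require Import all_classical all_reals all_analysis.
Import Order.TTheory GRing.Theory Num.Theory.
Import numFieldNormedType.Exports.
Local Open Scope ring_scope.

Lemma D_lin (R : realType) (U V : normedModType R) (G : V -> R) (L : U -> V)
  (hL : forall (h : R) v a, L (h *: v + a) = h *: L v + L a) (v a : U) :
  'D_v (fun z => G (L z)) a = 'D_(L v) G (L a).
Proof.
rewrite /derive; do 2 f_equal; apply/funext => h /=.
by rewrite /shift /= addrC hL addrC.
Qed.

Lemma D_scale (R : realType) (V : normedModType R) (G : V -> R) (c : R) (v a : V) :
  differentiable G a -> 'D_(c *: v) G a = c * 'D_v G a.
Proof. by move=> dG; rewrite !deriveE // linearZ. Qed.

Lemma Gdiff (R : realType) (k : nat) (g : 'cV[R]_k -> R) (y : R)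
  (hg : forall a : 'cV[R]_k, differentiable g a) (p : 'cV[R]_k) :
  differentiable (fun q => (y - g q) ^+ 2 / 2) p.
Proof.
have -> : (fun q => (y - g q) ^+ 2 / 2) = (fun q => 2^-1 *: ((cst y - g) ^+ 2) q).
  by apply/funext => q; rewrite /= mulrC.
apply: differentiableZ.
apply: differentiableX.
apply: differentiableB => //; exact: differentiable_cst.
Qed.
Lemma delta_mul (R : realType) (k d : nat) (i : 'I_k) (j : 'I_d) (x : 'cV[R]_d) :
  delta_mx i j *m x = x j 0 *: delta_mx i 0.
Proof.
apply/matrixP => a b; rewrite !mxE (bigD1 j) //= big1 ?addr0.
  by rewrite !mxE eqxx andbT ord1 mulrC; case: (a == i); rewrite ?mulr1 ?mulr0.
by move=> l /negPf hl; rewrite !mxE hl andbF mul0r.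
Qed.

Lemma rank1_mul (R : realType) (k d : nat) (u : 'cV[R]_k) (x : 'cV[R]_d) (i : 'I_d) :
  u *m x^T *m delta_mx i 0 = x i 0 *: u.
Proof.
rewrite -mulmxA.
have -> : x^T *m delta_mx i (0 : 'I_1) = (x i 0)%:M.
  apply/matrixP => a b; rewrite !mxE (bigD1 i) //= big1 ?addr0.
    by rewrite !mxE !ord1 !eqxx /= mulr1 mulr1n.
  by move=> l /negPf hl; rewrite !mxE hl /= mulr0.
by rewrite mul_mx_scalar.
Qed.

Lemma gd_form (R : realType) (d k : nat) (g : 'cV[R]_k -> R)
  (hg : forall a : 'cV[R]_k, differentiable g a)
  (x : 'cV[R]_d) (y eta : R) (t : nat) :
  exists u : 'cV[R]_k, gd_iter g x y eta t = u *m x^T.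
Proof.
elim: t => [|t [u hu]] /=.
  by exists 0; rewrite mul0mx.
rewrite -/(gd_iter g x y eta t); set B := gd_iter g x y eta t.
pose G := fun q : 'cV[R]_k => (y - g q) ^+ 2 / 2.
exists (u - eta *: \col_i 'D_(delta_mx i 0) G (B *m x)).
rewrite /B hu mulmxBl -scalemxAl; congr (_ - _ *: _).
apply/matrixP => i j; rewrite !mxE.
rewrite (@D_lin _ _ _ G (fun M : 'M[R]_(k, d) => M *m x)); last first.
  by move=> h v a; rewrite mulmxDl scalemxAl.
rewrite delta_mul D_scale; last exact: Gdiff.
rewrite big_ord1 !mxE mulrC; done.
Qed.
Theorem proposition1 (R : realType) (d k : nat) (hd : (1 <= d)%N) (hk : (1 <= k)%N)
  (g : 'cV[R]_k -> R) (hg : forall a : 'cV[R]_k, differentiable g a)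
  (x : 'cV[R]_d) (y eta : R) (heta : 0 < eta) (t : nat) (z : 'cV[R]_d) :
  exists c : R,
    mgrad (f_t g x y eta t) z *m (mgrad (f_t g x y eta t) z)^T
    = c *: ((gd_iter g x y eta t)^T *m gd_iter g x y eta t).
Proof.
have [u hu] := @gd_form R d k g hg x y eta t.
set s := 'D_u g (u *m x^T *m z).
have hgr : mgrad (f_t g x y eta t) z = s *: x.
  apply/matrixP => i j; rewrite !mxE /f_t hu.
  rewrite (@D_lin _ _ _ g (fun w : 'cV[R]_d => u *m x^T *m w)); last first.
    by move=> h v a; rewrite mulmxDr scalemxAr.
  by rewrite ord1 rank1_mul D_scale // mulrC.
rewrite hgr hu trmx_mul trmxK. rewrite linearZ /= -scalemxAl scalemxAr scalerA.
have -> : x *m u^T *m (u *m x^T) = (u^T *m u) 0 0 *: (x *m x^T).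
  rewrite mulmxA -(mulmxA x) [u^T *m u]mx11_scalar mul_mx_scalar -scalemxAl.
  by rewrite -mx11_scalar.
rewrite -scalemxAr.
have [u0|un0] := eqVneq u 0.
  exists 0; rewrite scale0r.
  have -> : s = 0 by rewrite /s u0 -(scale0r (0 : 'cV[R]_k)) D_scale // mul0r.
  by rewrite mulr0 scale0r.
have hn : (u^T *m u) 0 0 != 0.
  rewrite mxE psumr_eq0; last by move=> l _; rewrite mxE -expr2 sqr_ge0.
  apply: contra un0 => /allP h; apply/eqP/matrixP => a b.
  rewrite ord1 mxE; have := h a (mem_index_enum a).
  by rewrite mxE -expr2 sqrf_eq0 => /eqP.
exists (s * s / (u^T *m u) 0 0).
by rewrite scalerA divfK.
Qed.
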